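(* Let $K=K_0\supset K_1\supset K_2\supset\cdots$ be a module with a decreasing filtration by submodules (with the convention $K_q=K_0$ for $q<0$), and for each integer $r\ge -1$ let $\partial_r:K\to K$ be a linear map with $\partial_r(K_p)\subset K_p$ for all $p$, $\partial_{-1}=0$, and $\partial_r\circ\partial_s=0$ for all $r,s\ge -1$. For $r\ge -1$ and integers $p$ put $Z^r_p=\{x\in K_p:\ \partial_r x\in K_{p+r}\}$. Assume the following property: for all $r\ge 0$ and all $p$, if $x\in Z^r_p$ or $x\in Z^{r-1}_p$, then $\partial_r x-\partial_{r-1}x\in Z^{r-1}_{p+r}$. Then $Z^{r-1}_{p+1}\subset Z^r_p$ for all $r\ge 0$ and all $p\ge 0$.
   Context: The maps $\partial_r$ play the role of varying boundary operators converging in the filtration topology. *)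

(* Defs.v *)
From HB Require Import structures.
From mathcomp Require Import all_boot all_order all_algebra.
Set Implicit Arguments. Unset Strict Implicit. Unset Printing Implicit Defensive.
Import Order.TTheory GRing.Theory Num.Theory.
Local Open Scope ring_scope.

Definition Zset (V : Type) (F : int -> {pred V}) (d : int -> V -> V)
  (r p : int) (x : V) : Prop :=
  x \in F p /\ d r x \in F (p + r).

(* Main.v *)
Require Import Defs.
From HB Require Import structures.
From mathcomp Require Import all_boot all_order all_algebra.
Import Order.TTheory GRing.Theory Num.Theory.
Local Open Scope ring_scope.

Theorem mainTheorem2 (R : pzRingType) (V : lmodType R)
  (F : int -> {pred V}) (d : int -> {linear V -> V})
  (F_submod : forall p : int, submod_closed (F p))
  (F_decr : forall (p : int) (x : V), x \in F (p + 1) -> x \in F p)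
  (F_top : forall (p : int) (x : V), p <= 0 -> x \in F p)
  (d_filt : forall (r p : int) (x : V), -1 <= r -> x \in F p -> d r x \in F p)
  (d_m1 : forall x : V, d (-1) x = 0)
  (d_sq : forall (r s : int) (x : V), -1 <= r -> -1 <= s -> d r (d s x) = 0)
  (hyp : forall (r p : int) (x : V), 0 <= r ->
     Zset F d r p x \/ Zset F d (r - 1) p x ->
     Zset F d (r - 1) (p + r) (d r x - d (r - 1) x)) :
  forall (r p : int) (x : V), 0 <= r -> 0 <= p ->
    Zset F d (r - 1) (p + 1) x -> Zset F d r p x.
Proof.
move=> r p x r0 p0 [hx hdx].
have [h1 _] := hyp r (p + 1) x r0 (or_intror (conj hx hdx)).
split; first by apply: F_decr.
have h2 : d r x - d (r - 1) x \in F (p + r).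
  apply: F_decr; by rewrite addrAC.
have hdx' : d (r - 1) x \in F (p + r) by move: hdx; rewrite addrACA subrr addr0.
have [_ cl] := F_submod (p + r).
have := cl 1 _ _ h2 hdx'.
by rewrite scale1r subrK.
Qed.
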